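(* For every commutative ring $A$ there exists a ring extension $A\subseteq B$ such that the canonical map $\mathfrak{C}(A,B)\to\operatorname{Pic}(A)$, sending the class of an invertible ideal $L$ to $[L]$, is an isomorphism of groups.
   Context: For an extension of rings $A\subseteq B$ and $A$-submodules $L,L'$ of $B$, $LL'$ is the $A$-submodule of finite sums $\sum x_ky_k$. An $A$-submodule $L$ of $B$ is an invertible ideal of $A\subseteq B$ if $LL'=A$ for some $A$-submodule $L'$ of $B$; these form an abelian group $\mathscr{G}(A,B)$ under multiplication and $\mathfrak{C}(A,B)=\mathscr{G}(A,B)/\{Ax:x\in B^\ast\}$. Invertible ideals are finitely generated projective $A$-modules of rank one, so $L\mapsto[L]$ gives a map to $\operatorname{Pic}(A)$, the group of isomorphism classes of finitely generated projective $A$-modules of constant rank $1$ under $\otimes_A$. *)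

(* Defs.v *)
From HB Require Import structures.
From mathcomp Require Import all_boot all_order all_algebra.
Set Implicit Arguments. Unset Strict Implicit. Unset Printing Implicit Defensive.
Import GRing.Theory.
Local Open Scope ring_scope.

Section Defs.
Variables (A B : comPzRingType) (i : {rmorphism A -> B}).

Definition is_submod (L : B -> Prop) : Prop :=
  [/\ L 0, (forall x y, L x -> L y -> L (x + y))
    & (forall a x, L x -> L (i a * x))].

Definition prodm (L L' : B -> Prop) : B -> Prop := fun z =>
  exists n (u v : 'I_n -> B),
    (forall k, L (u k) /\ L' (v k)) /\ z = \sum_(k < n) u k * v k.

Definition imA : B -> Prop := fun z => exists a, z = i a.

Definition invertible_ideal (L : B -> Prop) : Prop :=
  is_submod L /\ exists L', is_submod L' /\ forall z, prodm L L' z <-> imA z.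

Definition principal (x : B) : B -> Prop := fun z => exists a, z = i a * x.

Definition iso_to_sub (M : lmodType A) (L : B -> Prop) : Prop :=
  exists phi : M -> B,
    [/\ (forall x y, phi (x + y) = phi x + phi y),
        (forall a x, phi (a *: x) = i a * phi x),
        injective phi
      & (forall z, L z <-> exists x, z = phi x)].

(* the A-submodule LL' of B, with multiplication L x L' -> LL', is a tensor
   product L ⊗_A L' (universal property); i.e. [L][L'] = [LL'] in Pic A *)
Definition mult_is_tensor (L L' : B -> Prop) : Prop :=
  forall (N : lmodType A) (c : B -> B -> N),
    (forall x x' y, L x -> L x' -> L' y -> c (x + x') y = c x y + c x' y) ->
    (forall x y y', L x -> L' y -> L' y' -> c x (y + y') = c x y + c x y') ->
    (forall a x y, L x -> L' y -> c (i a * x) y = a *: c x y) ->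
    (forall a x y, L x -> L' y -> c x (i a * y) = a *: c x y) ->
    let lin g := (forall z z', prodm L L' z -> prodm L L' z' ->
                    g (z + z') = g z + g z') /\
                 (forall a z, prodm L L' z -> g (i a * z) = a *: g z) /\
                 (forall x y, L x -> L' y -> g (x * y) = c x y) in
    exists g : B -> N, lin g /\
      forall g' : B -> N, lin g' -> forall z, prodm L L' z -> g' z = g z.

End Defs.

Section Pic.
Variable A : comPzRingType.

Definition is_prime_ideal (P : A -> Prop) : Prop :=
  [/\ P 0, (forall x y, P x -> P y -> P (x + y)),
      (forall a x, P x -> P (a * x)), ~ P 1
    & (forall a b, P (a * b) -> P a \/ P b)].

(* finitely generated projective: direct summand of a free module A^n *)
Definition fg_projective (M : lmodType A) : Prop :=
  exists n (p : 'rV[A]_n -> M) (s : M -> 'rV[A]_n),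
    [/\ (forall a x y, p (a *: x + y) = a *: p x + p y),
        (forall a x y, s (a *: x + y) = a *: s x + s y)
      & (forall m, p (s m) = m)].

(* M_P is free of rank one over A_P (localizations written out):
   some m/1 generates M_P and has annihilator 0 in A_P *)
Definition loc_free_rank1 (M : lmodType A) (P : A -> Prop) : Prop :=
  exists m : M,
    (forall x : M, exists s a, ~ P s /\ s *: x = a *: m) /\
    (forall a, (exists u, ~ P u /\ (u * a) *: m = 0) ->
               exists v, ~ P v /\ v * a = 0).

Definition const_rank1 (M : lmodType A) : Prop :=
  forall P, is_prime_ideal P -> loc_free_rank1 M P.

Definition in_Pic (M : lmodType A) : Prop := fg_projective M /\ const_rank1 M.

End Pic.

(* Main.v *)
Require Import Defs.
From HB Require Import structures.
From mathcomp Require Import all_boot all_order all_algebra.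
From mathcomp Require Import boolp classical_sets.
From Stdlib Require Import ProofIrrelevance.
From mathcomp Require Import ring.
Set Implicit Arguments. Unset Strict Implicit. Unset Printing Implicit Defensive.
Import GRing.Theory.
Local Open Scope ring_scope.

Section Loc.
Variable A : comPzRingType.

Definition prm := {P : A -> Prop | is_prime_ideal P}.

Record raw := Raw { num : prm -> A; den : prm -> A;
                    denP : forall P : prm, ~ (sval P) (den P) }.

Definition req (F G : raw) : Prop := forall P : prm,
  exists u, ~ sval P u /\ u * (num F P * den G P - num G P * den F P) = 0.

Lemma prime_mul (P : prm) a b : ~ sval P a -> ~ sval P b -> ~ sval P (a * b).
Proof. by case: P => P [? ? ? ? pr] /= Ha Hb /pr []. Qed.

Lemma prime_1 (P : prm) : ~ sval P 1.
Proof. by case: P => P [? ? ? ? ?]. Qed.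

Lemma req_refl F : req F F.
Proof. move=> P; exists 1; split; first exact: prime_1. by rewrite subrr mulr0. Qed.

Lemma req_sym F G : req F G -> req G F.
Proof.
move=> H P; have [u [Pu Hu]] := H P; exists u; split => //.
by rewrite -opprB mulrN Hu oppr0.
Qed.

Lemma req_trans F G H : req F G -> req G H -> req F H.
Proof.
move=> H1 H2 P; have [u [Pu Hu]] := H1 P; have [v [Pv Hv]] := H2 P.
exists (u * v * den G P); split.
  by apply: prime_mul; [apply: prime_mul|apply: denP].
set a := num F P; set s := den F P; set b := num G P; set t := den G P.
set c := num H P; set r := den H P.
have -> : u * v * t * (a * r - c * s) =
   v * r * (u * (a * t - b * s)) + u * s * (v * (b * r - c * t)) by ring.
by rewrite Hu Hv !mulr0 addr0.
Qed.

Definition Bt := {C : raw -> Prop | exists F, C = req F}.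
Definition pi (F : raw) : Bt := exist _ (req F) (ex_intro _ F erefl).
Definition repr (C : Bt) : raw := projT1 (cid (proj2_sig C)).

Lemma piP F G : pi F = pi G <-> req F G.
Proof.
split.
  move=> /(f_equal (@proj1_sig _ _)) /= E.
  by have := req_refl G; rewrite -E.
move=> FG; rewrite /pi.
have E : req F = req G.
  apply: funext => H; apply: propext; split.
    by move=> FH; apply: req_trans (req_sym FG) FH.
  by move=> GH; apply: req_trans FG GH.
move: (ex_intro _ F _) (ex_intro _ G _); rewrite E => p q.
by rewrite (proof_irrelevance _ p q).
Qed.

Lemma reprK C : pi (repr C) = C.
Proof.
rewrite /repr; case: cid => F /= E; case: C E => C pC /= E.
subst C; rewrite /pi; congr exist; exact: proof_irrelevance.
Qed.

Lemma repr_req F : req (repr (pi F)) F.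
Proof. by apply/piP; rewrite reprK. Qed.

Lemma Bt_ind (Q : Bt -> Prop) : (forall F, Q (pi F)) -> forall C, Q C.
Proof. by move=> H C; rewrite -(reprK C). Qed.

Definition radd (F G : raw) : raw :=
  Raw (fun P => num F P * den G P + num G P * den F P)
      (fun P => prime_mul (@denP F P) (@denP G P)).
Definition rmul (F G : raw) : raw :=
  Raw (fun P => num F P * num G P) (fun P => prime_mul (@denP F P) (@denP G P)).
Definition ropp (F : raw) : raw := Raw (fun P => - num F P) (@denP F).
Definition rcst (a : A) : raw := Raw (fun _ => a) (@prime_1).

Lemma req_exact F G : (forall P, num F P * den G P = num G P * den F P) -> req F G.
Proof.
move=> H P; exists 1; split; first exact: prime_1.
by rewrite H subrr mulr0.
Qed.

Lemma radd_req F F' G : req F F' -> req (radd F G) (radd F' G).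
Proof.
move=> H P; have [u [Pu Hu]] := H P; exists u; split => //=.
set a := num F P; set s := den F P; set a' := num F' P; set s' := den F' P.
set b := num G P; set t := den G P.
have -> : u * ((a * t + b * s) * (s' * t) - (a' * t + b * s') * (s * t)) =
  t * t * (u * (a * s' - a' * s)) by ring.
by rewrite Hu mulr0.
Qed.

Lemma rmul_req F F' G : req F F' -> req (rmul F G) (rmul F' G).
Proof.
move=> H P; have [u [Pu Hu]] := H P; exists u; split => //=.
set a := num F P; set s := den F P; set a' := num F' P; set s' := den F' P.
set b := num G P; set t := den G P.
have -> : u * (a * b * (s' * t) - a' * b * (s * t)) =
  b * t * (u * (a * s' - a' * s)) by ring.
by rewrite Hu mulr0.
Qed.

Lemma ropp_req F F' : req F F' -> req (ropp F) (ropp F').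
Proof.
move=> H P; have [u [Pu Hu]] := H P; exists u; split => //=.
have -> : u * (- num F P * den F' P - - num F' P * den F P) =
  - (u * (num F P * den F' P - num F' P * den F P)) by ring.
by rewrite Hu oppr0.
Qed.

Lemma radd_exactC F G : req (radd F G) (radd G F).
Proof. apply: req_exact => P /=; ring. Qed.
Lemma rmul_exactC F G : req (rmul F G) (rmul G F).
Proof. apply: req_exact => P /=; ring. Qed.

Lemma radd_req2 F F' G G' : req F F' -> req G G' -> req (radd F G) (radd F' G').
Proof.
move=> H1 H2; apply: req_trans (radd_req G H1) _.
apply: req_trans (radd_exactC _ _) _; apply: req_trans (radd_req F' H2) _.
exact: radd_exactC.
Qed.

Lemma rmul_req2 F F' G G' : req F F' -> req G G' -> req (rmul F G) (rmul F' G').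
Proof.
move=> H1 H2; apply: req_trans (rmul_req G H1) _.
apply: req_trans (rmul_exactC _ _) _; apply: req_trans (rmul_req F' H2) _.
exact: rmul_exactC.
Qed.

Definition badd (C D : Bt) : Bt := pi (radd (repr C) (repr D)).
Definition bmul (C D : Bt) : Bt := pi (rmul (repr C) (repr D)).
Definition bopp (C : Bt) : Bt := pi (ropp (repr C)).
Definition bzero : Bt := pi (rcst 0).
Definition bone : Bt := pi (rcst 1).

Lemma baddE F G : badd (pi F) (pi G) = pi (radd F G).
Proof. by apply/piP; apply: radd_req2; apply: repr_req. Qed.
Lemma bmulE F G : bmul (pi F) (pi G) = pi (rmul F G).
Proof. by apply/piP; apply: rmul_req2; apply: repr_req. Qed.
Lemma boppE F : bopp (pi F) = pi (ropp F).
Proof. by apply/piP; apply: ropp_req; apply: repr_req. Qed.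

HB.instance Definition _ := gen_eqMixin Bt.
HB.instance Definition _ := gen_choiceMixin Bt.

Lemma baddA : associative badd.
Proof.
elim/Bt_ind => F; elim/Bt_ind => G; elim/Bt_ind => H.
rewrite !baddE; apply/piP; apply: req_exact => P /=; ring.
Qed.
Lemma baddC : commutative badd.
Proof.
elim/Bt_ind => F; elim/Bt_ind => G; rewrite !baddE; apply/piP; exact: radd_exactC.
Qed.
Lemma badd0 : left_id bzero badd.
Proof.
elim/Bt_ind => F; rewrite baddE; apply/piP; apply: req_exact => P /=; ring.
Qed.
Lemma baddN : left_inverse bzero bopp badd.
Proof.
elim/Bt_ind => F; rewrite boppE baddE; apply/piP; apply: req_exact => P /=; ring.
Qed.

HB.instance Definition _ := GRing.isZmodule.Build Bt baddA baddC badd0 baddN.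

Lemma bmulA : associative bmul.
Proof.
elim/Bt_ind => F; elim/Bt_ind => G; elim/Bt_ind => H.
rewrite !bmulE; apply/piP; apply: req_exact => P /=; ring.
Qed.
Lemma bmulC : commutative bmul.
Proof.
elim/Bt_ind => F; elim/Bt_ind => G; rewrite !bmulE; apply/piP; exact: rmul_exactC.
Qed.
Lemma bmul1 : left_id bone bmul.
Proof.
elim/Bt_ind => F; rewrite bmulE; apply/piP; apply: req_exact => P /=; ring.
Qed.
Lemma bmulDl : left_distributive bmul badd.
Proof.
elim/Bt_ind => F; elim/Bt_ind => G; elim/Bt_ind => H.
rewrite !(baddE, bmulE); apply/piP; apply: req_exact => P /=; ring.
Qed.

HB.instance Definition _ := GRing.Zmodule_isComPzRing.Build Bt bmulA bmulC bmul1 bmulDl.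

Definition iota (a : A) : Bt := pi (rcst a).

Lemma iotaB : zmod_morphism iota.
Proof.
move=> a b; rewrite /iota.
have -> : (pi (rcst a) - pi (rcst b) : Bt) = badd (pi (rcst a)) (bopp (pi (rcst b))) by [].
rewrite boppE baddE; apply/piP; apply: req_exact => P /=; ring.
Qed.
Lemma iotaM : monoid_morphism iota.
Proof.
split => // a b; rewrite /iota.
have -> : (pi (rcst a) * pi (rcst b) : Bt) = bmul (pi (rcst a)) (pi (rcst b)) by [].
rewrite bmulE; apply/piP; apply: req_exact => P /=; ring.
Qed.
HB.instance Definition _ := GRing.isZmodMorphism.Build A Bt iota iotaB.
HB.instance Definition _ := GRing.isMonoidMorphism.Build A Bt iota iotaM.

End Loc.

Section Zorn.
Variable A : comPzRingType.

Definition is_ideal (J : A -> Prop) :=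
  [/\ J 0, (forall x y, J x -> J y -> J (x + y)) & (forall a x, J x -> J (a * x))].

Lemma local_global (I : A -> Prop) : is_ideal I ->
  (forall P : prm A, exists u, ~ sval P u /\ I u) -> I 1.
Proof.
move=> II Hloc; apply: contrapT => nI1.
pose Ps : set (set A) := fun J => (forall x, ~ J x) \/
   [/\ is_ideal J, (forall x, I x -> J x) & ~ J 1].
have [|A0 [PA0 maxA0]] := @Zorn_bigcup A Ps.
  move=> F FP Ftot.
  have [[X FX [x Xx]]|none] := lem (exists2 X, F X & exists x, X x); last first.
    left=> x [X FX Xx]; apply: none; exists X => //; by exists x.
  have idl Y : F Y -> (exists y, Y y) -> [/\ is_ideal Y, (forall x, I x -> Y x) & ~ Y 1].
    by move=> FY [y Yy]; case: (FP Y FY) => // /(_ y).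
  have [[X0 X0a X0m] IX nX1] := idl X FX (ex_intro _ x Xx).
  right; split.
  - split.
    + by exists X.
    + move=> y z [Y FY Yy] [Z FZ Zz].
      have [[Y0 Ya Ym] _ _] := idl Y FY (ex_intro _ y Yy).
      have [[Z0 Za Zm] _ _] := idl Z FZ (ex_intro _ z Zz).
      case: (Ftot Y Z FY FZ) => [YZ|ZY].
        by exists Z => //; apply: Za => //; apply: YZ.
      by exists Y => //; apply: Ya => //; apply: ZY.
    + move=> a y [Y FY Yy]; have [[Y0 Ya Ym] _ _] := idl Y FY (ex_intro _ y Yy).
      by exists Y => //; apply: Ym.
  - by move=> y Iy; exists X => //; apply: IX.
  - by move=> [Y FY Y1]; have [_ _ ] := idl Y FY (ex_intro _ 1 Y1); apply.
case: PA0 => [empty|[[A00 A0a A0m] IA0 nA01]].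
  apply: (maxA0 I); last by right; split => //.
  split; first by move=> x /empty.
  by move=> /(_ 0); case: II => I0 _ _ /(_ I0) /empty.
have prA0 : is_prime_ideal A0.
  split => // a b Hab; apply: contrapT => /not_orP [na nb].
  pose J : set A := fun z => exists j r, A0 j /\ z = j + r * a.
  have J1 : J 1.
    apply: contrapT => nJ1; apply: (maxA0 J).
      split; first by move=> z A0z; exists z, 0; split => //; rewrite mul0r addr0.
      by move=> /(_ a) H; apply: na; apply: H; exists 0, 1; rewrite add0r mul1r.
    right; split => //.
      split; first by exists 0, 0; rewrite mul0r addr0.
        move=> y z [j [r [A0j ->]]] [j' [r' [A0j' ->]]].
        exists (j + j'), (r + r'); split; first by apply: A0a.
        by rewrite mulrDl addrACA.
      move=> c y [j [r [A0j ->]]]; exists (c * j), (c * r); split; first by apply: A0m.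
      by rewrite mulrDr mulrA.
    by move=> z Iz; exists z, 0; split; [apply: IA0|rewrite mul0r addr0].
  case: J1 => j [r [A0j E]]; apply: nb.
  have -> : b = b * j + r * (a * b) by rewrite -[b in LHS]mulr1 E; ring.
  by apply: A0a; apply: A0m.
have [u [nu Iu]] := Hloc (exist _ A0 prA0).
by apply: nu; apply: IA0.
Qed.
End Zorn.

Section Gen.
Variables (A B : comPzRingType) (i : {rmorphism A -> B}).
Hypothesis inj : injective i.

Definition pre (z : B) : A :=
  match pselect (exists a, z = i a) with
  | left h => projT1 (cid h) | right _ => 0 end.

Lemma preK z : imA i z -> i (pre z) = z.
Proof.
rewrite /pre => h; case: pselect => [h'|//]; by case: cid => a /= ->.
Qed.

Lemma pre_i a : pre (i a) = a.
Proof. by apply: inj; rewrite preK //; exists a. Qed.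

Lemma imA_i a : imA i (i a). Proof. by exists a. Qed.
Lemma imA_add z w : imA i z -> imA i w -> imA i (z + w).
Proof. by move=> [a ->] [b ->]; exists (a + b); rewrite rmorphD. Qed.
Lemma imA_mul z w : imA i z -> imA i w -> imA i (z * w).
Proof. by move=> [a ->] [b ->]; exists (a * b); rewrite rmorphM. Qed.
Lemma imA_sum n (F : 'I_n -> B) : (forall k, imA i (F k)) -> imA i (\sum_(k < n) F k).
Proof.
move=> H; apply: (big_ind (imA i)) => //; first by exists 0; rewrite rmorph0.
exact: imA_add.
Qed.

Lemma preD z w : imA i z -> imA i w -> pre (z + w) = pre z + pre w.
Proof. by move=> [a ->] [b ->]; rewrite -rmorphD !pre_i. Qed.
Lemma preM z w : imA i z -> imA i w -> pre (z * w) = pre z * pre w.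
Proof. by move=> [a ->] [b ->]; rewrite -rmorphM !pre_i. Qed.
Lemma preZ a z : imA i z -> pre (i a * z) = a * pre z.
Proof. by move=> [b ->]; rewrite -rmorphM !pre_i. Qed.
Lemma pre_sum n (F : 'I_n -> B) : (forall k, imA i (F k)) ->
  pre (\sum_(k < n) F k) = \sum_(k < n) pre (F k).
Proof.
move=> H; apply: inj; rewrite preK; last exact: imA_sum.
rewrite rmorph_sum; apply: eq_bigr => k _; by rewrite preK.
Qed.

Lemma prod1 (L L' : B -> Prop) x y : L x -> L' y -> prodm L L' (x * y).
Proof.
move=> Lx Ly; exists 1%N, (fun _ => x), (fun _ => y); split => //.
by rewrite big_ord1.
Qed.

Lemma prodm0 (L L' : B -> Prop) : prodm L L' 0.
Proof. exists 0%N, (fun _ => 0), (fun _ => 0); split => [[]//|]; by rewrite big_ord0. Qed.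

Lemma prodmD (L L' : B -> Prop) z w : prodm L L' z -> prodm L L' w -> prodm L L' (z + w).
Proof.
move=> [n [u [v [Huv ->]]]] [m [u' [v' [Huv' ->]]]].
exists (n + m)%N, (fun k => match split k with inl a => u a | inr b => u' b end),
  (fun k => match split k with inl a => v a | inr b => v' b end); split.
  by move=> k; case: (split k).
rewrite big_split_ord /=; congr (_ + _); apply: eq_bigr => k _.
  by rewrite (unsplitK (inl _ k) : split (lshift m k) = inl k).
by rewrite (unsplitK (inr _ k) : split (rshift n k) = inr k).
Qed.

Lemma submod_sum (L : B -> Prop) n (F : 'I_n -> B) : is_submod i L ->
  (forall k, L (F k)) -> L (\sum_(k < n) F k).
Proof. by case=> L0 LD _ H; apply: (big_ind L). Qed.

Lemma submodN (L : B -> Prop) x : is_submod i L -> L x -> L (- x).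
Proof. by case=> _ _ LZ Lx; rewrite -mulN1r -(rmorphN1 i); apply: LZ. Qed.

Lemma inv_decomp L : invertible_ideal i L ->
  exists L1, [/\ is_submod i L1, (forall x y, L x -> L1 y -> imA i (x * y)) &
   exists n (u v : 'I_n -> B), (forall k, L (u k) /\ L1 (v k)) /\
       \sum_(k < n) u k * v k = 1].
Proof.
move=> [HL [L1 [HL1 E]]]; exists L1; split => //.
  by move=> x y Lx Ly; apply/E; apply: prod1.
have : imA i 1 by exists 1; rewrite rmorph1.
move=> /E [n [u [v [H1 H2]]]]; exists n, u, v; split => //.
Qed.

Lemma prodm_imA L L' L1 L1' z x y :
  (forall x y, L x -> L1 y -> imA i (x * y)) ->
  (forall x y, L' x -> L1' y -> imA i (x * y)) ->
  prodm L L' z -> L1 x -> L1' y -> imA i (z * x * y).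
Proof.
move=> H H' [n [u [v [Huv ->]]]] Lx Ly.
rewrite mulr_suml mulr_suml; apply: imA_sum => k.
have -> : u k * v k * x * y = (u k * x) * (v k * y) by ring.
by apply: imA_mul; [apply: H|apply: H']; case: (Huv k).
Qed.

Definition subT (L : B -> Prop) (HL : is_submod i L) := {x : B | L x}.

Section SubT.
Variables (L : B -> Prop) (HL : is_submod i L).
Let L0 : L 0. Proof. by case: HL. Qed.
Let LD x y : L x -> L y -> L (x + y). Proof. by case: HL => _ H _; apply: H. Qed.
Let LZ a x : L x -> L (i a * x). Proof. by case: HL => _ _ H; apply: H. Qed.
Let LN x : L x -> L (- x). Proof. exact: submodN. Qed.

HB.instance Definition _ := gen_eqMixin (subT HL).
HB.instance Definition _ := gen_choiceMixin (subT HL).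

Definition sz : subT HL := exist _ 0 L0.
Definition sadd (x y : subT HL) : subT HL :=
  exist _ (sval x + sval y) (LD (proj2_sig x) (proj2_sig y)).
Definition sopp (x : subT HL) : subT HL := exist _ (- sval x) (LN (proj2_sig x)).
Definition sscale (a : A) (x : subT HL) : subT HL :=
  exist _ (i a * sval x) (LZ a (proj2_sig x)).

Lemma sval_inj (x y : subT HL) : sval x = sval y -> x = y.
Proof. by case: x => x px; case: y => y py /= E; apply: eq_exist. Qed.

Lemma saddA : associative sadd.
Proof. by move=> x y z; apply: sval_inj => /=; rewrite addrA. Qed.
Lemma saddC : commutative sadd.
Proof. by move=> x y; apply: sval_inj => /=; rewrite addrC. Qed.
Lemma sadd0 : left_id sz sadd.
Proof. by move=> x; apply: sval_inj => /=; rewrite add0r. Qed.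
Lemma saddN : left_inverse sz sopp sadd.
Proof. by move=> x; apply: sval_inj => /=; rewrite addNr. Qed.
HB.instance Definition _ := GRing.isZmodule.Build (subT HL) saddA saddC sadd0 saddN.

Lemma sscaleA a b v : sscale a (sscale b v) = sscale (a * b) v.
Proof. by apply: sval_inj => /=; rewrite rmorphM mulrA. Qed.
Lemma sscale1 : left_id 1 sscale.
Proof. by move=> v; apply: sval_inj => /=; rewrite rmorph1 mul1r. Qed.
Lemma sscaleDr : right_distributive sscale +%R.
Proof. by move=> a u v; apply: sval_inj => /=; rewrite mulrDr. Qed.
Lemma sscaleDl v : {morph sscale^~ v: a b / a + b}.
Proof. by move=> a b; apply: sval_inj => /=; rewrite rmorphD mulrDl. Qed.
HB.instance Definition _ := GRing.Zmodule_isLmodule.Build A (subT HL)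
  sscaleA sscale1 sscaleDr sscaleDl.

Lemma sval_sum n (F : 'I_n -> subT HL) : sval (\sum_(k < n) F k) = \sum_(k < n) sval (F k).
Proof. by apply: (big_morph (fun x : subT HL => sval x)). Qed.

End SubT.

Lemma prime_sum (P : A -> Prop) n (F : 'I_n -> A) : is_prime_ideal P ->
  (forall k, P (F k)) -> P (\sum_(k < n) F k).
Proof. by case=> P0 PD _ _ _ H; apply: (big_ind P). Qed.

Lemma inv_in_Pic L : invertible_ideal i L ->
  exists M : lmodType A, in_Pic M /\ iso_to_sub i M L.
Proof.
move=> HI; have HL : is_submod i L by case: HI.
have [L1 [HL1 imLL1 [n [u [v [Huv Hsum]]]]]] := inv_decomp HI.
pose M : lmodType A := subT HL.
have Lu k : L (u k) by case: (Huv k).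
have Lv k : L1 (v k) by case: (Huv k).
pose e k : M := exist _ (u k) (Lu k).
exists M; split; last first.
  exists (fun x : M => sval x); split => //.
  - by move=> x y /=; apply: sval_inj.
  - by move=> z; split => [Lz|[x ->]]; [exists (exist _ z Lz)|exact: (proj2_sig x)].
have imx (x : M) k : imA i (sval x * v k) by apply: imLL1 => //; exact: (proj2_sig x).
split.
  exists n, (fun r : 'rV[A]_n => \sum_(k < n) r 0 k *: e k),
     (fun x : M => \row_(k < n) pre (sval x * v k)); split.
  - move=> a x y; rewrite scaler_sumr -big_split /=; apply: eq_bigr => k _.
    by rewrite !mxE scalerDl scalerA.
  - move=> a x y; apply/rowP => k; rewrite !mxE /=.
    rewrite mulrDl -mulrA preD ?preZ //; apply: imA_mul => //; exact: imA_i.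
  - move=> m; apply: sval_inj; rewrite sval_sum /=.
    under eq_bigr => k _ do rewrite mxE /= preK //.
    rewrite -[RHS](mulr1 (sval m)) -Hsum mulr_sumr; apply: eq_bigr => k _.
    by rewrite -mulrA (mulrC (v k)).
move=> P HP.
have Hs : \sum_(k < n) pre (u k * v k) = 1.
  apply: inj; rewrite rmorph_sum rmorph1 -Hsum; apply: eq_bigr => k _.
  by rewrite preK //; apply: imLL1.
have [k nPk] : exists k, ~ P (pre (u k * v k)).
  apply: contrapT => H; have [_ _ _ nP1 _] := HP; apply: nP1; rewrite -Hs.
  by apply: prime_sum => // k; apply: contrapT => nk; apply: H; exists k.
exists (e k); split.
  move=> x; exists (pre (u k * v k)), (pre (sval x * v k)); split => //.
  apply: sval_inj => /=; rewrite !preK //; last by apply: imLL1.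
  by rewrite mulrC -mulrA (mulrC (v k)).
move=> a [w [nPw H0]]; exists (w * pre (u k * v k)); split.
  by case: HP => _ _ _ _ pr /pr [].
apply: inj; rewrite rmorph0 !rmorphM preK; last by apply: imLL1.
have := f_equal (fun x : M => sval x * v k) H0 => /=.
by rewrite mul0r rmorphM => E; rewrite -E; ring.
Qed.
End Gen.

Section Gen2.
Variables (A B : comPzRingType) (i : {rmorphism A -> B}).
Hypothesis inj : injective i.

Lemma add_sum (M N : zmodType) (f : M -> N) n (F : 'I_n -> M) :
  (forall x y, f (x + y) = f x + f y) -> f (\sum_(k < n) F k) = \sum_(k < n) f (F k).
Proof.
move=> fD; have f0 : f 0 = 0 by apply: (addrI (f 0)); rewrite -fD !addr0.
exact: (big_morph f fD f0).
Qed.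

Lemma transfer L (M : lmodType A) (phi psi : M -> B) : invertible_ideal i L ->
  (forall x y, phi (x + y) = phi x + phi y) ->
  (forall a x, phi (a *: x) = i a * phi x) -> injective phi ->
  (forall z, L z <-> exists x, z = phi x) ->
  (forall x y, psi (x + y) = psi x + psi y) ->
  (forall a x, psi (a *: x) = i a * psi x) ->
  exists c, forall m, psi m = phi m * c.
Proof.
move=> HI phiD phiZ phiI phiIm psiD psiZ.
have [L1 [HL1 imLL1 [n [u [w [Huw Hs]]]]]] := inv_decomp HI.
have Lu j : L (u j) by case: (Huw j).
have Lw j : L1 (w j) by case: (Huw j).
pose mj j := projT1 (cid ((phiIm (u j)).1 (Lu j))).
have mjE j : u j = phi (mj j) by rewrite /mj; case: cid.
have Lphi m : L (phi m) by apply/phiIm; exists m.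
exists (\sum_(j < n) psi (mj j) * w j) => m.
have E : m = \sum_(j < n) pre i (phi m * w j) *: mj j.
  apply: phiI; rewrite add_sum //.
  rewrite -[LHS]mulr1 -Hs mulr_sumr; apply: eq_bigr => j _.
  have imj : imA i (phi m * w j) by apply: imLL1.
  by rewrite phiZ preK // -mjE -!mulrA (mulrC (u j)).
rewrite [in LHS]E add_sum // mulr_sumr; apply: eq_bigr => j _.
have imj : imA i (phi m * w j) by apply: imLL1.
by rewrite psiZ preK // -!mulrA (mulrC (w j)).
Qed.

Lemma class_inj L L' : invertible_ideal i L -> invertible_ideal i L' ->
  (exists M : lmodType A, iso_to_sub i M L /\ iso_to_sub i M L') ->
  exists x : B, (exists y : B, x * y = 1) /\
    forall z, L' z <-> prodm L (principal i x) z.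
Proof.
move=> HI HI' [M [[phi [phiD phiZ phiI phiIm]] [psi [psiD psiZ psiI psiIm]]]].
have [x Ex] := transfer HI phiD phiZ phiI phiIm psiD psiZ.
have [y Ey] := transfer HI' psiD psiZ psiI psiIm phiD phiZ.
exists x; split.
  exists y.
  have [L1 [HL1 imLL1 [n [u [w [Huw Hs]]]]]] := inv_decomp HI.
  transitivity ((\sum_(j < n) u j * w j) * (x * y)); first by rewrite Hs mul1r.
  rewrite mulr_suml -[RHS]Hs; apply: eq_bigr => j _.
  have [Lu _] := Huw j; have [m ->] := (phiIm _).1 Lu.
  by rewrite mulrAC mulrA -Ex -Ey.
move=> z; split.
  move=> /psiIm [m ->]; rewrite Ex; apply: prod1; first by apply/phiIm; exists m.
  by exists 1; rewrite rmorph1 mul1r.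
move=> [n [u [v [Huv ->]]]].
pose mk k := projT1 (cid ((phiIm (u k)).1 (proj1 (Huv k)))).
have mkE k : u k = phi (mk k) by rewrite /mk; case: cid.
pose ak k := projT1 (cid (proj2 (Huv k))).
have akE k : v k = i (ak k) * x by rewrite /ak; case: cid.
apply/psiIm; exists (\sum_(k < n) ak k *: mk k).
rewrite add_sum //; apply: eq_bigr => k _.
by rewrite psiZ Ex mkE akE !mulrA (mulrC (phi _)).
Qed.

Lemma mult_tensor L L' : invertible_ideal i L -> invertible_ideal i L' ->
  mult_is_tensor i L L'.
Proof.
move=> HI HI' N c cDl cDr cZl cZr lin.
have HL : is_submod i L by case: HI.
have HL' : is_submod i L' by case: HI'.
have [L1 [HL1 imLL1 [n [u [w [Huw Hs]]]]]] := inv_decomp HI.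
have [L1' [HL1' imLL1' [n' [u' [w' [Huw' Hs']]]]]] := inv_decomp HI'.
have Lu j : L (u j) by case: (Huw j).
have Lw j : L1 (w j) by case: (Huw j).
have Lu' j : L' (u' j) by case: (Huw' j).
have Lw' j : L1' (w' j) by case: (Huw' j).
have L0 : L 0 by case: HL.
have L'0 : L' 0 by case: HL'.
have c0l y : L' y -> c 0 y = 0.
  by move=> Ly; apply: (addrI (c 0 y)); rewrite -cDl // !addr0.
have c0r x : L x -> c x 0 = 0.
  by move=> Lx; apply: (addrI (c x 0)); rewrite -cDr // !addr0.
have c_suml m (F : 'I_m -> B) y : (forall j, L (F j)) -> L' y ->
    c (\sum_(j < m) F j) y = \sum_(j < m) c (F j) y.
  move=> LF Ly.
  suff [] : L (\sum_(j < m) F j) /\ c (\sum_(j < m) F j) y = \sum_(j < m) c (F j) y by [].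
  apply: (big_rec2 (fun y1 y2 => L y1 /\ c y1 y = y2)); first by split => //; apply: c0l.
  move=> j y1 y2 _ [Ly1 <-]; split; first by case: HL => _ HD _; apply: HD.
  by rewrite cDl.
have c_sumr m (F : 'I_m -> B) x : (forall j, L' (F j)) -> L x ->
    c x (\sum_(j < m) F j) = \sum_(j < m) c x (F j).
  move=> LF Lx.
  suff [] : L' (\sum_(j < m) F j) /\ c x (\sum_(j < m) F j) = \sum_(j < m) c x (F j) by [].
  apply: (big_rec2 (fun y1 y2 => L' y1 /\ c x y1 = y2)); first by split => //; apply: c0r.
  move=> j y1 y2 _ [Ly1 <-]; split; first by case: HL' => _ HD _; apply: HD.
  by rewrite cDr.
have lin_rep g0 : lin g0 -> forall m (x y : 'I_m -> B), (forall k, L (x k) /\ L' (y k)) ->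
    g0 (\sum_(k < m) x k * y k) = \sum_(k < m) c (x k) (y k).
  move=> [g0D [g0Z g0c]] m x y Hxy.
  have g00 : g0 0 = 0.
    by apply: (addrI (g0 0)); rewrite -g0D ?addr0 //; apply: prodm0.
  suff [] : prodm L L' (\sum_(k < m) x k * y k) /\
     g0 (\sum_(k < m) x k * y k) = \sum_(k < m) c (x k) (y k) by [].
  apply: (big_rec2 (fun z1 n1 => prodm L L' z1 /\ g0 z1 = n1)).
    by split => //; apply: prodm0.
  move=> k z1 n1 _ [Pz1 <-]; have [Lx Ly] := Hxy k.
  have Pk : prodm L L' (x k * y k) by apply: prod1.
  by split; [apply: prodmD | rewrite g0D // g0c].
have imz z j k : prodm L L' z -> imA i (z * w j * w' k).
  by move=> Pz; apply: (prodm_imA imLL1 imLL1').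
pose g z := \sum_(j < n) \sum_(k < n') pre i (z * w j * w' k) *: c (u j) (u' k).
have lin_g : lin g.
  split; [|split].
  - move=> z z' Pz Pz'; rewrite /g -big_split; apply: eq_bigr => j _.
    rewrite -big_split; apply: eq_bigr => k _.
    by rewrite !mulrDl preD ?scalerDl //; apply: imz.
  - move=> a z Pz; rewrite /g scaler_sumr; apply: eq_bigr => j _.
    rewrite scaler_sumr; apply: eq_bigr => k _.
    by rewrite scalerA -preZ ?mulrA //; apply: imz.
  - move=> x y Lx Ly.
    have imx j : imA i (x * w j) by apply: imLL1.
    have imy k : imA i (y * w' k) by apply: imLL1'.
    have Ex : x = \sum_(j < n) i (pre i (x * w j)) * u j.
      rewrite -[LHS]mulr1 -Hs mulr_sumr; apply: eq_bigr => j _.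
      by rewrite preK // -mulrA (mulrC (w j)).
    have Ey : y = \sum_(k < n') i (pre i (y * w' k)) * u' k.
      rewrite -[LHS]mulr1 -Hs' mulr_sumr; apply: eq_bigr => k _.
      by rewrite preK // -mulrA (mulrC (w' k)).
    have LZ a z : L z -> L (i a * z) by case: HL => _ _; apply.
    have LZ' a z : L' z -> L' (i a * z) by case: HL' => _ _; apply.
    rewrite [in RHS]Ex c_suml //; last by move=> j; apply: LZ.
    rewrite /g; apply: eq_bigr => j _.
    rewrite cZl // [in RHS]Ey c_sumr //; last by move=> k; apply: LZ'.
    rewrite scaler_sumr; apply: eq_bigr => k _.
    rewrite cZr // scalerA -preM //.
    by congr (pre i _ *: _); rewrite !mulrA; congr (_ * _); rewrite -!mulrA; congr (_ * _); rewrite mulrC.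
exists g; split => // g' lin_g' z [m [x [y [Hxy ->]]]].
by rewrite (lin_rep g' lin_g' m x y Hxy) (lin_rep g lin_g m x y Hxy).
Qed.
End Gen2.

Section Surj.
Variable A : comPzRingType.

Lemma iota_inj : injective (@iota A).
Proof.
move=> a b /piP H.
pose I := fun c : A => c * (a - b) = 0.
have II : is_ideal I.
  split; rewrite /I.
  - by rewrite mul0r.
  - by move=> x y Hx Hy; rewrite mulrDl Hx Hy addr0.
  - by move=> c x Hx; rewrite -mulrA Hx mulr0.
have : I 1.
  apply: (local_global II) => P; have [u [nu Hu]] := H P; exists u; split => //.
  by rewrite /I; move: Hu => /=; rewrite !mulr1.
by rewrite /I mul1r => /eqP; rewrite subr_eq0 => /eqP.
Qed.

Variable M : lmodType A.
Hypothesis HM : in_Pic M.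

Let HC : const_rank1 M := proj2 HM.

Definition mP (P : prm A) : M := projT1 (cid (HC (proj2_sig P))).

Lemma mP_spec (P : prm A) :
  (forall x : M, exists s a, ~ sval P s /\ s *: x = a *: mP P) /\
  (forall a, (exists u, ~ sval P u /\ (u * a) *: mP P = 0) ->
               exists v, ~ sval P v /\ v * a = 0).
Proof. by rewrite /mP; case: cid. Qed.

Lemma gen' (P : prm A) (x : M) :
  exists sa : A * A, ~ sval P sa.1 /\ sa.1 *: x = sa.2 *: mP P.
Proof.
have [/(_ x) [s [a [H1 H2]]] _] := mP_spec P; by exists (s, a).
Qed.

Lemma ann1 (P : prm A) c : c *: mP P = 0 -> exists v, ~ sval P v /\ v * c = 0.
Proof.
move=> H; have [_ ann] := mP_spec P; apply: ann; exists 1; split.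
  exact: prime_1.
by rewrite mul1r.
Qed.

Definition loc (x : M) (P : prm A) : A * A := projT1 (cid (gen' P x)).
Lemma locP x P : ~ sval P (loc x P).1 /\ (loc x P).1 *: x = (loc x P).2 *: mP P.
Proof. by rewrite /loc; case: cid. Qed.

Definition fraw (x : M) : raw A :=
  @Raw A (fun P => (loc x P).2) (fun P => (loc x P).1) (fun P => proj1 (locP x P)).
Definition f (x : M) : Bt A := pi (fraw x).

Lemma frawE x P s a : s *: x = a *: mP P ->
  exists v, ~ sval P v /\ v * ((loc x P).2 * s - a * (loc x P).1) = 0.
Proof.
move=> E; apply: ann1; have [_ E0] := locP x P.
rewrite scalerBl (mulrC _ s) (mulrC a) -!scalerA -E0 -E !scalerA (mulrC s) subrr //.
Qed.

Lemma fD x y : f (x + y) = f x + f y.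
Proof.
have -> : f x + f y = badd (f x) (f y) by [].
rewrite /f baddE; apply/piP => P /=.
set s1 := (loc x P).1; set a1 := (loc x P).2.
set s2 := (loc y P).1; set a2 := (loc y P).2.
apply: frawE.
have [_ E1] := locP x P; have [_ E2] := locP y P.
have E1' : s1 *: x = a1 *: mP P by exact: E1.
have E2' : s2 *: y = a2 *: mP P by exact: E2.
rewrite scalerDr scalerDl -!scalerA.
rewrite [s1 *: (s2 *: x)]scalerA [s1 * s2]mulrC -scalerA E1' E2' !scalerA.
by rewrite [a1 * s2]mulrC [a2 * s1]mulrC.
Qed.

Lemma fZ c x : f (c *: x) = @iota A c * f x.
Proof.
have -> : @iota A c * f x = bmul (@iota A c) (f x) by [].
rewrite /f /iota bmulE; apply/piP => P /=.
apply: frawE; have [_ E1] := locP x P.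
by rewrite scalerA mul1r mulrC -scalerA E1 scalerA.
Qed.

Lemma f0 : f 0 = 0.
Proof. by apply: (addrI (f 0)); rewrite -fD !addr0. Qed.

Lemma f_inj : injective f.
Proof.
move=> x y /piP H.
pose I := fun c : A => c *: (x - y) = 0.
have II : is_ideal I.
  split; rewrite /I.
  - by rewrite scale0r.
  - by move=> c d Hc Hd; rewrite scalerDl Hc Hd addr0.
  - by move=> c d Hd; rewrite -scalerA Hd scaler0.
have : I 1.
  apply: (local_global II) => P; have [u [nu Hu]] := H P; move: Hu => /=.
  have [n1 E1] := locP x P; have [n2 E2] := locP y P.
  set s1 := (loc x P).1 in n1 E1 *; set a1 := (loc x P).2 in E1 *.
  set s2 := (loc y P).1 in n2 E2 *; set a2 := (loc y P).2 in E2 *.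
  move=> Hu; exists (u * s1 * s2); split.
    by apply: prime_mul => //; apply: prime_mul.
  rewrite /I scalerBr.
  have -> : (u * s1 * s2) *: x = (u * s2) *: (s1 *: x) by rewrite scalerA; congr (_ *: _); ring.
  have -> : (u * s1 * s2) *: y = (u * s1) *: (s2 *: y) by rewrite scalerA; congr (_ *: _); ring.
  rewrite E1 E2 !scalerA -scalerBl.
  have -> : u * s2 * a1 - u * s1 * a2 = u * (a1 * s2 - a2 * s1) by ring.
  by rewrite Hu scale0r.
by rewrite /I scale1r => /eqP; rewrite subr_eq0 => /eqP.
Qed.

Let HP := proj1 HM.

Lemma surj_part : exists L, invertible_ideal (@iota A) L /\ iso_to_sub (@iota A) M L.
Proof.
have [n [p [s [pL sL ps]]]] := HP.
pose sk k (x : M) := s x 0 k.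
have s0 : s 0 = 0.
  have := sL 1 0 0; rewrite !scale1r addr0 => E.
  by apply: (addrI (s 0)); rewrite addr0 -E.
have skD k x y : sk k (x + y) = sk k x + sk k y.
  by rewrite /sk -{1}(scale1r x) sL scale1r mxE.
have skZ k a x : sk k (a *: x) = a * sk k x.
  by rewrite /sk -(addr0 (a *: x)) sL s0 addr0 mxE.
have sk0 k : sk k 0 = 0 by rewrite /sk s0 mxE.
pose graw k : raw A := @Raw A (fun P => sk k (mP P)) (fun _ => 1) (@prime_1 A).
have fg x k : f x * pi (graw k) = @iota A (sk k x).
  have -> : f x * pi (graw k) = bmul (f x) (pi (graw k)) by [].
  rewrite /f /iota bmulE; apply/piP; apply: req_exact => P /=.
  have [_ E] := locP x P.
  by rewrite !mulr1 -skZ -E skZ mulrC.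
pose L := fun z => exists x, z = f x.
pose L' := fun z => forall x, imA (@iota A) (f x * z).
have HL : is_submod (@iota A) L.
  split.
  - by exists 0; rewrite f0.
  - by move=> _ _ [x ->] [y ->]; exists (x + y); rewrite fD.
  - by move=> a _ [x ->]; exists (a *: x); rewrite fZ.
have HL' : is_submod (@iota A) L'.
  split.
  - by move=> x; rewrite mulr0; exists 0; rewrite rmorph0.
  - by move=> z w Hz Hw x; rewrite mulrDr; apply: imA_add.
  - by move=> a z Hz x; rewrite mulrCA; apply: imA_mul; [exact: imA_i|].
exists L; split; last first.
  exists f; split => //; [exact: fD | exact: fZ | exact: f_inj].
split => //; exists L'; split => // z; split.
  move=> [m [u [v [Huv ->]]]]; apply: imA_sum => k.
  by have [[x ->] Lv] := Huv k; apply: Lv.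
move=> [c ->].
pose T := fun t : A => exists y : 'I_n -> M, t = \sum_(k < n) sk k (y k).
have IT : is_ideal T.
  split.
  - by exists (fun _ => 0); rewrite big1.
  - move=> _ _ [y ->] [y' ->]; exists (fun k => y k + y' k).
    by rewrite -big_split; apply: eq_bigr => k _; rewrite skD.
  - move=> a _ [y ->]; exists (fun k => a *: y k).
    by rewrite mulr_sumr; apply: eq_bigr => k _; rewrite skZ.
have T1 : T 1.
  apply: local_global => // P; apply: contrapT => nT.
  have TP t : T t -> sval P t.
    by move=> Tt; apply: contrapT => nt; apply: nT; exists t.
  have skP k x : sval P (sk k x).
    apply: TP; exists (fun j => if j == k then x else 0).
    rewrite (eq_bigr (fun j => if j == k then sk k x else 0)).
      by rewrite -big_mkcond big_pred1_eq.
    by move=> j _; case: eqP => [->|]; rewrite ?sk0.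
  case: P skP {nT TP} => P [P0 PD PM nP1 Ppr] /= skP.
  set P' : prm A := exist _ P (And5 P0 PD PM nP1 Ppr).
  pose m := mP P'.
  pose Q := fun v : M => exists t d, ~ P t /\ P d /\ t *: v = d *: m.
  have Qm : Q m.
    have -> : m = p (s m) by rewrite ps.
    have pD x y : p (x + y) = p x + p y by rewrite -{1}(scale1r x) pL scale1r.
    have p0 : p 0 = 0 by apply: (addrI (p 0)); rewrite -pD !addr0.
    have pZ a x : p (a *: x) = a *: p x by rewrite -(addr0 (a *: x)) pL p0 addr0.
    rewrite [s m]row_sum_delta (big_morph p pD p0).
    apply: (big_ind Q).
    - exists 1, 0; split; first exact: nP1.
      by split; [exact: P0 | rewrite scaler0 scale0r].
    - move=> v1 v2 [t1 [d1 [n1 [p1 E1]]]] [t2 [d2 [n2 [p2 E2]]]].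
      exists (t1 * t2), (t2 * d1 + t1 * d2); split.
        by move=> /Ppr [].
      split; first by apply: (PD); apply: (PM).
      rewrite scalerDr scalerDl -!scalerA -E1 -E2 !scalerA (mulrC t1) //.
    - move=> k _; rewrite pZ.
      have [/(_ (p 'e_k)) [t [b [nt E]]] _] := mP_spec P'.
      exists t, (s m 0 k * b); split => //; split.
        by rewrite mulrC; apply: (PM); apply: (skP k m).
      by rewrite scalerA (mulrC t) -scalerA -[in LHS]scalerA E.
  case: Qm => t [d [nt [pd E]]].
  have [v [nv Hv]] : exists v, ~ sval P' v /\ v * (t - d) = 0.
    by apply: ann1; rewrite scalerBl E subrr.
  have : P (v * (t - d)) by rewrite Hv.
  move=> /(Ppr _ _) [//|Ptd]; apply: nt.
  by rewrite -(subrK d t); apply: (PD).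
case: T1 => y E1.
exists n, (fun k => f (y k)), (fun k => @iota A c * pi (graw k)); split.
  move=> k; split; first by exists (y k).
  by move=> x; rewrite mulrCA fg; apply: imA_mul; exact: imA_i.
rewrite -[LHS]mulr1 -(rmorph1 (@iota A)) E1 rmorph_sum mulr_sumr.
by apply: eq_bigr => k _; rewrite mulrCA fg.
Qed.

End Surj.
Unset Implicit Arguments.

Theorem corollary4p3 (A : comPzRingType) :
  exists (B : comPzRingType) (i : {rmorphism A -> B}),
    injective i /\
    (forall L, invertible_ideal i L ->
       exists M : lmodType A, in_Pic M /\ iso_to_sub i M L) /\
    (forall L L', invertible_ideal i L -> invertible_ideal i L' ->
       mult_is_tensor i L L') /\
    (forall L L', invertible_ideal i L -> invertible_ideal i L' ->
       (exists M : lmodType A, iso_to_sub i M L /\ iso_to_sub i M L') ->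
       exists x : B, (exists y : B, x * y = 1) /\
         forall z, L' z <-> prodm L (principal i x) z) /\
    (forall M : lmodType A, in_Pic M ->
       exists L, invertible_ideal i L /\ iso_to_sub i M L).
Proof.
exists (Bt A), (@iota A).
have inj := @iota_inj A.
split => //; split; first by move=> L; apply: inv_in_Pic.
split; first by move=> L L'; apply: mult_tensor.
split; first by move=> L L'; apply: class_inj.
by move=> M HM; apply: surj_part.
Qed.
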